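(* Let $S$ be a semigroup and $a\in S$ an idempotent with $aSa\subseteq\operatorname{Reg}(S)$. Put $P=\{x\in Sa: x\,\mathscr L\,ax\}$ and $\phi:P\to aSa$, $x\mapsto ax$. Then $$\operatorname{MI}(Sa)=\operatorname{RI}(Sa)=\operatorname{MI}(P)=\operatorname{RI}(P)=V_P(a)=V(a)\cap P=V(a)\cap Sa=V(a)a=E(\widehat H^a_a)=a\phi^{-1}.$$
   Context: For a semigroup $T$: $\operatorname{RI}(T)$ is the set of right identities ($u$ with $xu=x$ for all $x\in T$); $\operatorname{MI}(T)$ is the set of mid-identities ($u$ with $xy=xuy$ for all $x,y\in T$); $E(T)$ is the set of idempotents. $V(a)=\{y\in S: a=aya,\ y=yay\}$ and $V_P(a)=\{y\in P: a=aya,\ y=yay\}$. $\widehat H^a_a=\{x\in P: ax \text{ is } \mathscr H\text{-related to } a \text{ in the monoid } aSa\}$. $\mathscr L$ is Green's relation on $S$. *)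

(* Defs.v *)
Set Implicit Arguments.
Unset Strict Implicit.

Section Defs.
Variables (T : Type) (mul : T -> T -> T).
Local Infix "*" := mul.

Definition seteq (A B : T -> Prop) : Prop := forall x, A x <-> B x.

Definition Reg (x : T) : Prop := exists y, x = x * y * x.

Definition rightmul (a : T) (x : T) : Prop := exists s, x = s * a.
Definition corner (a : T) (x : T) : Prop := exists s, x = a * s * a.

(* Green's L relation relative to a set U of multipliers:
   x L y iff U^1 x = U^1 y.  With U = S this is Green's L on S;
   with U = aSa (a monoid with identity a) it is Green's L in aSa. *)
Definition greenL (U : T -> Prop) (x y : T) : Prop :=
  (x = y \/ exists s, U s /\ x = s * y) /\ (y = x \/ exists s, U s /\ y = s * x).
Definition greenR (U : T -> Prop) (x y : T) : Prop :=
  (x = y \/ exists s, U s /\ x = y * s) /\ (y = x \/ exists s, U s /\ y = x * s).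
Definition greenH (U : T -> Prop) (x y : T) : Prop := greenL U x y /\ greenR U x y.

Definition allS : T -> Prop := fun _ => True.

Definition Pset (a : T) (x : T) : Prop := rightmul a x /\ greenL allS x (a * x).

Definition RI (U : T -> Prop) (u : T) : Prop := U u /\ forall x, U x -> x * u = x.
Definition MI (U : T -> Prop) (u : T) : Prop :=
  U u /\ forall x y, U x -> U y -> x * y = x * u * y.
Definition Eset (U : T -> Prop) (e : T) : Prop := U e /\ e * e = e.

Definition Vinv (a : T) (y : T) : Prop := a = a * y * a /\ y = y * a * y.
Definition VinvP (a : T) (y : T) : Prop := Pset a y /\ a = a * y * a /\ y = y * a * y.

Definition inter (A B : T -> Prop) (x : T) : Prop := A x /\ B x.

Definition Vinv_a (a : T) (x : T) : Prop := exists y, Vinv a y /\ x = y * a.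

Definition Hhat (a : T) (x : T) : Prop := Pset a x /\ greenH (corner a) (a * x) a.

Definition phi_preim (a : T) (x : T) : Prop := Pset a x /\ a * x = a.

End Defs.

(* Main.v *)
Require Import Defs.
From Stdlib Require Import Setoid.

Theorem proposition3p23 (T : Type) (mul : T -> T -> T)
  (mulA : forall x y z, mul x (mul y z) = mul (mul x y) z)
  (a : T) (a_idem : mul a a = a)
  (hreg : forall x, corner mul a x -> Reg mul x) :
  let Sa := rightmul mul a in
  let P := Pset mul a in
  seteq (MI mul Sa) (RI mul Sa) /\
  seteq (RI mul Sa) (MI mul P) /\
  seteq (MI mul P) (RI mul P) /\
  seteq (RI mul P) (VinvP mul a) /\
  seteq (VinvP mul a) (inter (Vinv mul a) P) /\
  seteq (inter (Vinv mul a) P) (inter (Vinv mul a) Sa) /\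
  seteq (inter (Vinv mul a) Sa) (Vinv_a mul a) /\
  seteq (Vinv_a mul a) (Eset mul (Hhat mul a)) /\
  seteq (Eset mul (Hhat mul a)) (phi_preim mul a).
Proof.
  intros Sa P.
  set (X := fun u => rightmul mul a u /\ mul a u = a).
  assert (Sra : forall u, rightmul mul a u -> mul u a = u).
  { intros u [s ->]. rewrite <- mulA, a_idem. reflexivity. }
  assert (Xsq : forall u, X u -> mul u u = u).
  { intros u [[s Hs] Hau]. rewrite Hs at 1. rewrite <- mulA, Hau. symmetry. exact Hs. }
  assert (XP : forall u, X u -> P u).
  { intros u [[s Hs] Hau]. split. exists s; exact Hs.
    split. right. exists s. split. exact I. rewrite Hau. exact Hs.
    right. exists a. split. exact I. reflexivity. }
  assert (PSa : forall u, P u -> Sa u). { intros u [H _]. exact H. }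
  assert (aSa : Sa a). { exists a. symmetry. exact a_idem. }
  assert (aP : P a). { split. exact aSa. split; left; [symmetry|]; exact a_idem. }
  assert (XV : forall u, X u -> Vinv mul a u).
  { intros u Hu. pose proof (Xsq u Hu) as Huu. destruct Hu as [Hs Hau].
    split. rewrite Hau, a_idem. reflexivity.
    rewrite (Sra u Hs). symmetry. exact Huu. }
  assert (E1 : forall u, MI mul Sa u <-> X u).
  { intros u; split.
    - intros [Hu H]. split. exact Hu. specialize (H a a aSa aSa).
      rewrite a_idem, <- mulA, (Sra u Hu) in H. symmetry. exact H.
    - intros [Hu Hau]. split. exact Hu. intros x y Hx Hy.
      destruct Hx as [s ->]. rewrite <- (mulA s a u), Hau. reflexivity. }
  assert (E2 : forall u, RI mul Sa u <-> X u).
  { intros u; split.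
    - intros [Hu H]. split. exact Hu. apply H, aSa.
    - intros [Hu Hau]. split. exact Hu. intros x [s ->].
      rewrite <- mulA, Hau. reflexivity. }
  assert (E3 : forall u, MI mul P u <-> X u).
  { intros u; split.
    - intros [Hu H]. split. apply PSa, Hu. specialize (H a a aP aP).
      rewrite a_idem, <- mulA, (Sra u (PSa u Hu)) in H. symmetry. exact H.
    - intros Hx. split. apply XP, Hx. destruct Hx as [Hu Hau].
      intros x y Hx Hy.
      destruct (PSa x Hx) as [s ->]. rewrite <- (mulA s a u), Hau. reflexivity. }
  assert (E4 : forall u, RI mul P u <-> X u).
  { intros u; split.
    - intros [Hu H]. split. apply PSa, Hu. apply H, aP.
    - intros Hx. split. apply XP, Hx. destruct Hx as [Hu Hau].
      intros x Hx. destruct (PSa x Hx) as [s ->].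
      rewrite <- mulA, Hau. reflexivity. }
  assert (E5 : forall u, inter (Vinv mul a) Sa u <-> X u).
  { intros u; split.
    - intros [[H1 H2] Hu]. split. exact Hu. rewrite H1 at 2.
      rewrite <- mulA, (Sra u Hu). reflexivity.
    - intros Hx. split. apply XV, Hx. apply Hx. }
  assert (E6 : forall u, inter (Vinv mul a) P u <-> X u).
  { intros u; split.
    - intros [H Hu]. apply E5. split. exact H. apply PSa, Hu.
    - intros Hx. split. apply XV, Hx. apply XP, Hx. }
  assert (E7 : forall u, VinvP mul a u <-> X u).
  { intros u. rewrite <- E6. unfold VinvP, inter, Vinv. tauto. }
  assert (E8 : forall u, Vinv_a mul a u <-> X u).
  { intros u; split.
    - intros [y [[H1 H2] ->]]. split. exists y. reflexivity.
      rewrite mulA. symmetry. exact H1.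
    - intros Hx. exists u. split. apply XV, Hx. symmetry. apply Sra, Hx. }
  assert (E9 : forall u, Eset mul (Hhat mul a) u <-> X u).
  { intros u; split.
    - intros [[Hu [_ [_ HR]]] Huu]. split. apply PSa, Hu.
      pose proof (Sra u (PSa u Hu)) as Hua.
      assert (Hi : mul (mul a u) (mul a u) = mul a u).
      { rewrite mulA. rewrite <- (mulA a u a), Hua, <- mulA, Huu. reflexivity. }
      destruct HR as [H | [s [_ H]]]. symmetry; exact H.
      assert (mul (mul a u) a = a).
      { transitivity (mul (mul a u) (mul (mul a u) s)). f_equal; exact H.
        rewrite mulA, Hi. symmetry. exact H. }
      rewrite <- mulA, Hua in H0. exact H0.
    - intros Hx. split. split. apply XP, Hx.
      destruct Hx as [_ Hau]. rewrite Hau.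
      split; split; left; reflexivity.
      apply Xsq, Hx. }
  assert (E10 : forall u, phi_preim mul a u <-> X u).
  { intros u; split.
    - intros [Hu H]. split. apply PSa, Hu. exact H.
    - intros Hx. split. apply XP, Hx. apply Hx. }
  assert (C : forall A B : T -> Prop, (forall u, A u <-> X u) -> (forall u, B u <-> X u) -> seteq A B).
  { intros A B HA HB x. rewrite HA, HB. tauto. }
  exact (conj (C _ _ E1 E2) (conj (C _ _ E2 E3) (conj (C _ _ E3 E4) (conj (C _ _ E4 E7)
    (conj (C _ _ E7 E6) (conj (C _ _ E6 E5) (conj (C _ _ E5 E8) (conj (C _ _ E8 E9) (C _ _ E9 E10))))))))).
Qed.
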